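(* Let $R=\nabla\vdash l\to r$ be a standard nominal rule. Then $\mathcal{T}(\nabla,l)\Rightarrow\mathcal{T}(\nabla,r)$ is a CRS rule.
   Context: Nominal terms: $s,t ::= a \mid \pi\cdot X \mid [a]s \mid f\,s \mid (s_1,\ldots,s_n)$ over atoms, variables, function symbols with arities and finite-support permutations $\pi$ of atoms. A freshness context is a set of constraints $a\#X$. A nominal rule $\nabla\vdash l\to r$ has all variables of $r$ and $\nabla$ occurring in $l$. $\nabla\vdash t$ is closed if: (1) every atom occurrence $a$ in $t$ lies under an abstraction $[a]$; (2) if $\pi\cdot X$ is in the scope of an abstraction of $\pi(a)$ then every occurrence $\pi'\cdot X$ of $X$ in $t$ is in the scope of an abstraction of $\pi'(a)$, or $a\#X\in\nabla$; (3) for two occurrences $\pi_1\cdot X,\pi_2\cdot X$ and $a$ with $\pi_1(a)\neq\pi_2(a)$, if $a$ is not abstracted in one of the occurrences then $a\#X\in\nabla$. A rule is standard if $\nabla\vdash(l,r)$ is closed and $l$ has the form $f\,s$. CRS: meta-terms $a\mid Z(t_1,\dots,t_n)\mid[a]t\mid f\,t\mid(t_1,\dots,t_n)$ with meta-variables of fixed arity; a CRS rule is a pair $l\Rightarrow r$ of closed meta-terms (no free variables) with $l=f(s_1,\dots,s_n)$, all meta-variables of $r$ occurring in $l$, and meta-variables in $l$ occurring only in the form $Z(a_1,\dots,a_n)$ with $a_1,\dots,a_n$ pairwise distinct bound variables. Translation: $\Lambda_t(X)$ is the set of atoms $a$ such that some occurrence of $X$ in $t$ is in the scope of $[a]$.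 With a fixed total order on atoms, $\mathcal{T}(\nabla,t)$ is obtained from $t$ by replacing each occurrence $\pi\cdot X$ by $X(\pi\cdot xs)$, where $xs$ is the ascending list of $\{\pi^{-1}(a)\mid a\in\Lambda_t(X)\}\setminus\{a\mid a\#X\in\nabla\}$ and $\pi$ is applied elementwise; other constructs kept unchanged. In $\mathcal{T}(\nabla,l)$, $\Lambda_l$ is used, and in $\mathcal{T}(\nabla,r)$, $\Lambda_r$. *)

(* Defs.v *)
From mathcomp Require Import all_boot.
From Stdlib Require List.
Set Implicit Arguments. Unset Strict Implicit. Unset Printing Implicit Defensive.

(* Atoms, (nominal) variables, CRS meta-variables and function symbols are
   all represented by natural numbers; the total order on atoms is <= on nat. *)
Definition atom := nat.
Definition var := nat.
Definition fsym := nat.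

(* Finite-support permutations: finite compositions of swappings.
   The list [:: s1; ...; sn] denotes s1 o ... o sn. *)
Definition perm := seq (atom * atom).

Definition swap_at (s : atom * atom) (a : atom) : atom :=
  if a == s.1 then s.2 else if a == s.2 then s.1 else a.

Definition papply (p : perm) (a : atom) : atom := foldr swap_at a p.
Definition pinv (p : perm) : perm := rev p.

Inductive nterm :=
| NAtom of atom
| NSusp of perm & var
| NAbs of atom & nterm
| NApp of fsym & nterm
| NTup of seq nterm.

(* Freshness contexts: finite sets of constraints a # X, given as lists. *)
Definition fctx := seq (atom * var).

Fixpoint vocc (B : seq atom) (t : nterm) : seq (seq atom * perm * var) :=
  match t with
  | NAtom _ => [::]
  | NSusp p X => [:: (B, p, X)]
  | NAbs a s => vocc (a :: B) s
  | NApp _ s => vocc B s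
  | NTup ts => flatten (map (vocc B) ts)
  end.

Fixpoint aocc (B : seq atom) (t : nterm) : seq (seq atom * atom) :=
  match t with
  | NAtom a => [:: (B, a)]
  | NSusp _ _ => [::]
  | NAbs a s => aocc (a :: B) s
  | NApp _ s => aocc B s
  | NTup ts => flatten (map (aocc B) ts)
  end.

Definition nclosed (nab : fctx) (t : nterm) : Prop :=
  (forall B a, (B, a) \in aocc [::] t -> a \in B) /\
  (forall B p X a, (B, p, X) \in vocc [::] t -> papply p a \in B ->
     (forall B' p', (B', p', X) \in vocc [::] t -> papply p' a \in B')
     \/ (a, X) \in nab) /\
  (forall B1 p1 B2 p2 X a,
     (B1, p1, X) \in vocc [::] t -> (B2, p2, X) \in vocc [::] t ->
     papply p1 a != papply p2 a ->
     (papply p1 a \notin B1 \/ papply p2 a \notin B2) ->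
     (a, X) \in nab).

Definition nrule (nab : fctx) (l r : nterm) : Prop :=
  (forall B p X, (B, p, X) \in vocc [::] r ->
     exists B' p', (B', p', X) \in vocc [::] l) /\
  (forall a X, (a, X) \in nab -> exists B p, (B, p, X) \in vocc [::] l).

Definition standard_rule (nab : fctx) (l r : nterm) : Prop :=
  nrule nab l r /\ nclosed nab (NTup [:: l; r]) /\ exists f s, l = NApp f s.

Inductive mterm :=
| MAtom of atom
| MMeta of var & seq mterm
| MAbs of atom & mterm
| MApp of fsym & mterm
| MTup of seq mterm.

Fixpoint maocc (B : seq atom) (t : mterm) : seq (seq atom * atom) :=
  match t with
  | MAtom a => [:: (B, a)]
  | MMeta _ ts => flatten (map (maocc B) ts)
  | MAbs a s => maocc (a :: B) s
  | MApp _ s => maocc B s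
  | MTup ts => flatten (map (maocc B) ts)
  end.

Fixpoint mmocc (B : seq atom) (t : mterm) : seq (seq atom * var * seq mterm) :=
  match t with
  | MAtom _ => [::]
  | MMeta Z ts => (B, Z, ts) :: flatten (map (mmocc B) ts)
  | MAbs a s => mmocc (a :: B) s
  | MApp _ s => mmocc B s
  | MTup ts => flatten (map (mmocc B) ts)
  end.

Definition mclosed (t : mterm) : Prop :=
  forall B a, (B, a) \in maocc [::] t -> a \in B.

Definition crs_rule (l r : mterm) : Prop :=
  mclosed l /\ mclosed r /\
  (exists f s, l = MApp f s) /\
  (forall B Z ts, List.In (B, Z, ts) (mmocc [::] r) ->
     exists B' ts', List.In (B', Z, ts') (mmocc [::] l)) /\
  (forall B1 Z ts1 B2 ts2,
     List.In (B1, Z, ts1) (mmocc [::] l ++ mmocc [::] r) ->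
     List.In (B2, Z, ts2) (mmocc [::] l ++ mmocc [::] r) ->
     size ts1 = size ts2) /\
  (forall B Z ts, List.In (B, Z, ts) (mmocc [::] l) ->
     exists as_ : seq atom, ts = map MAtom as_ /\ uniq as_ /\ all (mem B) as_).

Definition Lambda (t : nterm) (X : var) : seq atom :=
  flatten [seq o.1.1 | o <- vocc [::] t & o.2 == X].

Definition trans_args (nab : fctx) (Lam : seq atom) (p : perm) (X : var)
  : seq atom :=
  sort leq (undup [seq b <- [seq papply (pinv p) a | a <- Lam]
                    | (b, X) \notin nab]).

Fixpoint trans_with (nab : fctx) (Lam : var -> seq atom) (t : nterm) : mterm :=
  match t with
  | NAtom a => MAtom a
  | NSusp p X =>
      MMeta X (map (fun b => MAtom (papply p b)) (trans_args nab (Lam X) p X))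
  | NAbs a s => MAbs a (trans_with nab Lam s)
  | NApp f s => MApp f (trans_with nab Lam s)
  | NTup ts => MTup (map (trans_with nab Lam) ts)
  end.

Definition Tr (nab : fctx) (t : nterm) : mterm := trans_with nab (Lambda t) t.

(* Main.v *)
Require Import Defs.
From mathcomp Require Import all_boot.
From Stdlib Require List.
Set Implicit Arguments.

Lemma swap_atK s : involutive (swap_at s).
Proof. move=> a; rewrite /swap_at; case: s => x y /=.
case: (eqVneq a x) => [->|hx]; first by rewrite eqxx; case: (eqVneq y x) => [->|].
case: (eqVneq a y) => [->|hy]; first by rewrite eqxx.
by rewrite (negbTE hx) (negbTE hy).
Qed.

Lemma pinv_cons x p a : papply (pinv (x :: p)) a = papply (pinv p) (swap_at x a).
Proof. by rewrite /papply /pinv rev_cons foldr_rcons. Qed.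

Lemma papplyK p : cancel (papply p) (papply (pinv p)).
Proof. elim: p => [//|x p IH] a. by rewrite pinv_cons /= swap_atK IH. Qed.

Lemma papplyVK p : cancel (papply (pinv p)) (papply p).
Proof. elim: p => [//|x p IH] a. by rewrite pinv_cons /= IH swap_atK. Qed.

Definition nterm_ind' (P : nterm -> Prop)
  (Ha : forall a, P (NAtom a)) (Hs : forall p X, P (NSusp p X))
  (Hab : forall a s, P s -> P (NAbs a s)) (Hap : forall f s, P s -> P (NApp f s))
  (Ht : forall ts, (forall t, List.In t ts -> P t) -> P (NTup ts)) : forall t, P t :=
  fix F t := match t with
  | NAtom a => Ha a
  | NSusp p X => Hs p X
  | NAbs a s => Hab a s (F s)
  | NApp f s => Hap f s (F s)
  | NTup ts => Ht ts ((fix G (us : seq nterm) : forall t, List.In t us -> P t :=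
       match us with
       | nil => fun t H => False_ind _ H
       | cons u us' => fun t H => match H with
           | or_introl e => eq_ind u P (F u) t e
           | or_intror H' => G us' t H' end end) ts)
  end.

Section Tr.
Variable nab : fctx.
Variable Lam : var -> seq atom.

Lemma L_aocc t : forall B B' a, (B', a) \in maocc B (trans_with nab Lam t) ->
  (B', a) \in aocc B t \/ exists p X b, (B', p, X) \in vocc B t /\
     b \in trans_args nab (Lam X) p X /\ a = papply p b.
Proof.
elim/nterm_ind': t => [a|p X|a s IH|f s IH|ts IH] B B' c /=.
- by left.
- move=> H; right; exists p, X.
  have: (B', c) \in [seq (B, papply p b) | b <- trans_args nab (Lam X) p X].
    move: H; elim: (trans_args _ _ _ _) => [//|b bs IHb] /=.
    by rewrite !inE => /orP [->//|/IHb ->]; rewrite orbT.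
  case/mapP => b Hb [-> ->]; exists b; by rewrite mem_seq1 eqxx.
- exact: IH.
- exact: IH.
- elim: ts IH => [//|u us IHs] IH /=.
  rewrite mem_cat => /orP [H|H].
  + case: (IH u (or_introl erefl) _ _ _ H) => [H1|[p [X [b [H1 H2]]]]].
    * by left; rewrite mem_cat H1.
    * by right; exists p, X, b; rewrite mem_cat H1.
  + case: (IHs (fun t Ht => IH t (or_intror Ht)) H) => [H1|[p [X [b [H1 H2]]]]].
    * by left; rewrite mem_cat H1 orbT.
    * by right; exists p, X, b; rewrite mem_cat H1 orbT.
Qed.

Lemma mm_atoms B (s : seq mterm) : (forall u, List.In u s -> exists a, u = MAtom a) ->
  flatten (map (mmocc B) s) = [::].
Proof.
elim: s => [//|u s IH] H /=. case: (H u (or_introl erefl)) => a -> /=.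
apply: IH => v Hv; exact: H v (or_intror Hv).
Qed.

Lemma mm_targs B p (s : seq atom) :
  flatten (map (mmocc B) (map (fun b => MAtom (papply p b)) s)) = [::].
Proof.
apply: mm_atoms => u; elim: s => [//|b s IH] /= [<-|H]; first by eexists.
exact: IH.
Qed.

Lemma L_mm t : forall B B' Z ts, List.In (B', Z, ts) (mmocc B (trans_with nab Lam t)) ->
  exists p, (B', p, Z) \in vocc B t /\
    ts = map (fun b => MAtom (papply p b)) (trans_args nab (Lam Z) p Z).
Proof.
elim/nterm_ind': t => [a|p X|a s IH|f s IH|ts IH] B B' Z us /=.
- by [].
- rewrite mm_targs => -[[<- <- <-]|//]; exists p; by rewrite mem_seq1 eqxx.
- exact: IH.
- exact: IH.
- elim: ts IH => [//|u vs IHs] IH /= H0; case: (List.in_app_or _ _ _ H0) => H.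
  + case: (IH u (or_introl erefl) _ _ _ _ H) => p [H1 H2].
    by exists p; rewrite mem_cat H1.
  + case: (IHs (fun t Ht => IH t (or_intror Ht)) H) => p [H1 H2].
    by exists p; rewrite mem_cat H1 orbT.
Qed.

Lemma L_mm_conv t : forall B B' p Z, (B', p, Z) \in vocc B t ->
  List.In (B', Z, map (fun b => MAtom (papply p b)) (trans_args nab (Lam Z) p Z))
    (mmocc B (trans_with nab Lam t)).
Proof.
elim/nterm_ind': t => [a|q X|a s IH|f s IH|ts IH] B B' p Z /=.
- by [].
- by rewrite mem_seq1 => /eqP [-> -> ->]; left.
- exact: IH.
- exact: IH.
- elim: ts IH => [//|u vs IHs] IH /=; rewrite mem_cat => /orP [H|H];
    apply: List.in_or_app.
  + left; exact: (IH u (or_introl erefl) _ _ _ _ H).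
  + right; exact: (IHs (fun t Ht => IH t (or_intror Ht)) H).
Qed.
End Tr.

Lemma Lambda_mem t X a : a \in Lambda t X ->
  exists B p, (B, p, X) \in vocc [::] t /\ a \in B.
Proof.
rewrite /Lambda => /flattenP [s /mapP [[[B p] Y] Ho ->] Ha].
move: Ho; rewrite mem_filter /= => /andP [/eqP -> Ho]; by exists B, p.
Qed.

Lemma Lambda_mem2 t X a B p : (B, p, X) \in vocc [::] t -> a \in B -> a \in Lambda t X.
Proof.
move=> Ho Ha; rewrite /Lambda; apply/flattenP; exists B => //.
apply/mapP; exists (B, p, X) => //; by rewrite mem_filter eqxx.
Qed.

Lemma targs_mem nab Lam p X b :
  b \in trans_args nab Lam p X = ((b, X) \notin nab) && (papply p b \in Lam).
Proof.
rewrite /trans_args mem_sort mem_undup mem_filter; congr (_ && _).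
apply/mapP/idP => [[a Ha ->]|Hb].
- by rewrite papplyVK.
- by exists (papply p b); rewrite // papplyK.
Qed.

Theorem mainTheorem8 (nab : fctx) (l r : nterm) :
  standard_rule nab l r -> crs_rule (Tr nab l) (Tr nab r).
Proof.
move=> [[Hrv Hnab] [[C1 [C2 C3]] [f [s Hl]]]].
set V := vocc [::] (NTup [:: l; r]).
have VE : V = vocc [::] l ++ vocc [::] r by rewrite /V /= cats0.
have AE : aocc [::] (NTup [:: l; r]) = aocc [::] l ++ aocc [::] r by rewrite /= cats0.
have subl : forall o, o \in vocc [::] l -> o \in V by move=> o Ho; rewrite VE mem_cat Ho.
have subr : forall o, o \in vocc [::] r -> o \in V by move=> o Ho; rewrite VE mem_cat Ho orbT.
have K1 : forall B p X B' p' b, (B, p, X) \in V -> (B', p', X) \in V ->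
    (b, X) \notin nab -> papply p b \in B' -> papply p b \in B.
  move=> B p X B' p' b H1 H2 Hn Hb; case Hbb: (papply p b \in B) => //.
  have Hb' : papply p b \notin B by rewrite Hbb.
  case: (eqVneq (papply p' b) (papply p b)) => [E|E].
  - case: (C2 B' p' X b H2); first by rewrite E.
    + by move=> /(_ B p H1); rewrite (negbTE Hb').
    + by move=> Hc; move: Hn; rewrite Hc.
  - have := C3 B p B' p' X b H1 H2; rewrite eq_sym E => /(_ isT (or_introl Hb')).
    by move=> Hc; move: Hn; rewrite Hc.
have K2 : forall t, (forall o, o \in vocc [::] t -> o \in V) ->
    forall B p X b, (B, p, X) \in vocc [::] t ->
    b \in trans_args nab (Lambda t X) p X -> papply p b \in B.
  move=> t sub B p X b Ho; rewrite targs_mem => /andP [Hn HL].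
  case: (Lambda_mem _ _ _ HL) => B' [p' [H1 H2]].
  exact: (K1 B p X B' p' b (sub _ Ho) (sub _ H1) Hn H2).
have K3 : forall t, (forall o, o \in vocc [::] t -> o \in V) ->
    forall B p X b, (B, p, X) \in vocc [::] t ->
    (b \in trans_args nab (Lambda t X) p X) = ((b, X) \notin nab) && (papply p b \in B).
  move=> t sub B p X b Ho; apply/idP/idP => [H|/andP [Hn Hb]].
  - by rewrite (K2 t sub B p X b Ho H) andbT; move: H; rewrite targs_mem => /andP [].
  - by rewrite targs_mem Hn (Lambda_mem2 _ _ _ _ _ Ho Hb).
have K4 : forall B1 p1 B2 p2 X b, (B1, p1, X) \in V -> (B2, p2, X) \in V ->
    ((b, X) \notin nab) && (papply p1 b \in B1) ->
    ((b, X) \notin nab) && (papply p2 b \in B2).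
  move=> B1 p1 B2 p2 X b H1 H2 /andP [Hn Hb]; rewrite Hn /=.
  case: (C2 B1 p1 X b H1 Hb) => [/(_ B2 p2 H2) //|Hc].
  by move: Hn; rewrite Hc.
have U : forall Lam p X, uniq (trans_args nab Lam p X).
  by move=> *; rewrite /trans_args sort_uniq undup_uniq.
have KS : forall t1 t2, (forall o, o \in vocc [::] t1 -> o \in V) ->
    (forall o, o \in vocc [::] t2 -> o \in V) ->
    forall B1 p1 B2 p2 X, (B1, p1, X) \in vocc [::] t1 -> (B2, p2, X) \in vocc [::] t2 ->
    size (trans_args nab (Lambda t1 X) p1 X) = size (trans_args nab (Lambda t2 X) p2 X).
  move=> t1 t2 s1 s2 B1 p1 B2 p2 X H1 H2; apply: perm_size; apply: uniq_perm => // b.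
  rewrite (K3 t1 s1 B1 p1 X b H1) (K3 t2 s2 B2 p2 X b H2).
  apply/idP/idP.
  - exact: (K4 _ _ _ _ _ _ (s1 _ H1) (s2 _ H2)).
  - exact: (K4 _ _ _ _ _ _ (s2 _ H2) (s1 _ H1)).
have MC : forall t, (forall o, o \in vocc [::] t -> o \in V) ->
    (forall o, o \in aocc [::] t -> o \in aocc [::] (NTup [:: l; r])) ->
    mclosed (Tr nab t).
  move=> t sv sa B a H; case: (L_aocc _ _ _ _ _ _ H) => [H1|[p [X [b [H1 [H2 ->]]]]]].
  - exact: C1 (sa _ H1).
  - exact: K2 t sv B p X b H1 H2.
have MM : forall t, (forall o, o \in vocc [::] t -> o \in V) ->
    forall B Z ts, List.In (B, Z, ts) (mmocc [::] (Tr nab t)) ->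
    exists p, (B, p, Z) \in vocc [::] t /\
      ts = map (fun b => MAtom (papply p b)) (trans_args nab (Lambda t Z) p Z).
  move=> t sv B Z ts H; exact: (L_mm _ _ _ _ _ _ _ H).
split; [|split; [|split; [|split; [|split]]]].
- apply: MC subl _ => o Ho; by rewrite AE mem_cat Ho.
- apply: MC subr _ => o Ho; by rewrite AE mem_cat Ho orbT.
- by rewrite /Tr Hl /=; eexists; eexists.
- move=> B Z ts H; case: (MM r subr B Z ts H) => p [H1 _].
  case: (Hrv B p Z H1) => B' [p' H2].
  exists B'; eexists; exact: (L_mm_conv _ _ _ _ _ _ _ H2).
- move=> B1 Z ts1 B2 ts2 H1 H2.
  have G : forall B ts, List.In (B, Z, ts) (mmocc [::] (Tr nab l) ++ mmocc [::] (Tr nab r)) ->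
      exists t, (forall o, o \in vocc [::] t -> o \in V) /\ exists p,
      (B, p, Z) \in vocc [::] t /\ size ts = size (trans_args nab (Lambda t Z) p Z).
    move=> B ts H; case: (List.in_app_or _ _ _ H) => H'.
    + case: (MM l subl _ _ _ H') => p [Ho ->]; exists l; split => //; exists p.
      by rewrite size_map.
    + case: (MM r subr _ _ _ H') => p [Ho ->]; exists r; split => //; exists p.
      by rewrite size_map.
  case: (G _ _ H1) => t1 [s1 [p1 [Ho1 ->]]].
  case: (G _ _ H2) => t2 [s2 [p2 [Ho2 ->]]].
  exact: KS s1 s2 _ _ _ _ _ Ho1 Ho2.
- move=> B Z ts H; case: (MM l subl B Z ts H) => p [H1 ->].
  exists (map (papply p) (trans_args nab (Lambda l Z) p Z)); split; last split.
  + by rewrite -map_comp.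
  + rewrite map_inj_uniq //; exact: can_inj (papplyK p).
  + apply/allP => a /mapP [b Hb ->]; exact: K2 l subl B p Z b H1 Hb.
Qed.
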